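(* Let $M,N,L$ be weight sequences satisfying $m_k^{1/k}\to\infty$, $n_k^{1/k}\to\infty$, $\ell_k^{1/k}\to\infty$. Assume that there is $A>0$ with $\mu_{2k}\le A\nu_k$ for all $k$, and that there is $C\ge1$ with $\frac{\nu_j}{j}\le C\frac{\lambda_k}{k}$ for all $1\le j\le k$. Then there exists $D\ge1$ such that $2\underline{\Gamma}_\ell(Dt)\le\underline{\Gamma}_m(t)$ for all $t>0$.
   Context: A weight sequence is given by an increasing sequence $1=\mu_0\le\mu_1\le\cdots$ via $M_k=\mu_0\cdots\mu_k=k!\,m_k$, with $M_k^{1/k}\to\infty$; analogously $\nu\leftrightarrow N\leftrightarrow n$ and $\lambda\leftrightarrow L\leftrightarrow\ell$. For a positive sequence $m$ with $m_0=1$ and $m_{k+1}/m_k\to\infty$, $\underline{\Gamma}_m(t)=\min\{k: m_{k+1}/m_k\ge1/t\}$ for $t>0$. *)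

(* Defs.v *)
From Stdlib Require Import Reals Lra Lia.
Open Scope R_scope.

Fixpoint bigM (mu : nat -> R) (k : nat) : R :=
  match k with
  | O => mu O
  | S k' => bigM mu k' * mu (S k')
  end.

Definition smallm (mu : nat -> R) (k : nat) : R := bigM mu k / INR (Factorial.fact k).

Definition weight_seq (mu : nat -> R) : Prop :=
  mu O = 1 /\ (forall k, mu k <= mu (S k)) /\
  cv_infty (fun k => Rpower (bigM mu k) (/ INR k)).

Definition Gamma_lower_is (m : nat -> R) (t : R) (k : nat) : Prop :=
  m (S k) / m k >= / t /\ (forall j, (j < k)%nat -> m (S j) / m j < / t).

(* Main.v *)
Require Import Defs.
From Stdlib Require Import Reals Lra Lia.
Open Scope R_scope.

Lemma mono_ge (mu : nat -> R) : (forall k, mu k <= mu (S k)) ->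
  forall a b, (a <= b)%nat -> mu a <= mu b.
Proof.
intros H a b hab; induction hab; [lra|]. specialize (H m); lra.
Qed.

Lemma bigM_pos (mu : nat -> R) : mu O = 1 -> (forall k, mu k <= mu (S k)) ->
  forall k, 0 < bigM mu k.
Proof.
intros H0 H k; induction k; simpl.
- lra.
- pose proof (mono_ge mu H 0 (S k) ltac:(lia)). nra.
Qed.

Lemma ratio (mu : nat -> R) : mu O = 1 -> (forall k, mu k <= mu (S k)) ->
  forall k, smallm mu (S k) / smallm mu k = mu (S k) / INR (S k).
Proof.
intros H0 H k. unfold smallm. simpl bigM.
change (Factorial.fact (S k)) with (S k * Factorial.fact k)%nat.
rewrite mult_INR.
pose proof (bigM_pos mu H0 H k).
pose proof (INR_fact_lt_0 k).
assert (0 < INR (S k)) by (apply lt_0_INR; lia).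
field. repeat split; lra.
Qed.

Theorem lemma3p4 (mu nu lam : nat -> R) :
  weight_seq mu -> weight_seq nu -> weight_seq lam ->
  cv_infty (fun k => Rpower (smallm mu k) (/ INR k)) ->
  cv_infty (fun k => Rpower (smallm nu k) (/ INR k)) ->
  cv_infty (fun k => Rpower (smallm lam k) (/ INR k)) ->
  (exists A, 0 < A /\ forall k, mu (2 * k)%nat <= A * nu k) ->
  (exists C, 1 <= C /\ forall j k, (1 <= j)%nat -> (j <= k)%nat ->
       nu j / INR j <= C * (lam k / INR k)) ->
  exists D, 1 <= D /\ forall t, 0 < t ->
    forall kl km, Gamma_lower_is (smallm lam) (D * t) kl ->
                  Gamma_lower_is (smallm mu) t km ->
                  (2 * kl <= km)%nat.
Proof.
intros [m0 [mm _]] [n0 [nm _]] [l0 [lm _]] _ _ _ [A [HA HmuA]] [C [HC HC']].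
exists (A*C+1). split; [nra|].
intros t Ht kl km [_ Hkl] [Hkm _].
destruct (Compare_dec.le_lt_dec (2*kl) km) as [h|h]; [exact h|exfalso].
set (q := ((km+2)/2)%nat).
pose proof (Nat.div_mod (km+2) 2 ltac:(lia)) as Hdm.
pose proof (Nat.mod_upper_bound (km+2) 2 ltac:(lia)) as Hmb.
fold q in Hdm.
assert (Hq1 : (1 <= q)%nat) by lia.
assert (Hq2 : (q - 1 < kl)%nat) by lia.
assert (Hq3 : (S km <= 2*q)%nat) by lia.
assert (Hq4 : (q <= S km)%nat) by lia.
specialize (Hkl _ Hq2).
rewrite ratio in Hkl by assumption.
replace (S (q-1)) with q in Hkl by lia.
rewrite ratio in Hkm by assumption.
pose proof (mono_ge mu mm _ _ Hq3) as H2.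
pose proof (HmuA q) as H3.
pose proof (HC' q q Hq1 (Nat.le_refl _)) as H4.
assert (Iq : 0 < INR q) by (apply lt_0_INR; lia).
assert (Ip : INR q <= INR (S km)) by (apply le_INR; lia).
pose proof (mono_ge lam lm 0 q ltac:(lia)) as Hl1.
set (x := lam q / INR q) in *.
set (y := nu q / INR q) in *.
set (p := INR (S km)) in *.
assert (Ex : lam q = x * INR q) by (unfold x; field; lra).
assert (Ey : nu q = y * INR q) by (unfold y; field; lra).
assert (Hx : 0 < x) by (unfold x; apply Rdiv_lt_0_compat; lra).
assert (Hm : / t <= mu (S km) / p) by lra.
assert (Hp : 0 < p) by lra.
assert (Hm2 : 1 <= mu (S km) * t / p).
{ apply Rmult_le_compat_r with (r := t) in Hm; [|lra].
  replace (/ t * t) with 1 in Hm by (field; lra).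
  replace (mu (S km) * t / p) with (mu (S km) / p * t) by (field; lra). lra. }
assert (Hm3 : p <= mu (S km) * t).
{ apply Rmult_le_compat_r with (r := p) in Hm2; [|lra].
  replace (mu (S km) * t / p * p) with (mu (S km) * t) in Hm2 by (field; lra). lra. }
assert (H5 : nu q <= C * lam q) by (rewrite Ex, Ey; nra).
assert (H6 : p <= A * C * x * INR q * t).
{ rewrite Ex in H5.
  assert (mu (S km) <= A * (C * (x * INR q))).
  { apply Rle_trans with (A * nu q); [lra|]. apply Rmult_le_compat_l; lra. }
  apply Rle_trans with (mu (S km) * t); [lra|].
  replace (A * C * x * INR q * t) with (A * (C * (x * INR q)) * t) by ring.
  apply Rmult_le_compat_r; lra. }
assert (H7 : 1 <= A * C * x * t) by nra.
assert (H8 : / ((A*C+1)*t) <= x).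
{ apply Rmult_le_reg_l with ((A*C+1)*t); [nra|].
  rewrite Rinv_r by nra. nra. }
lra.
Qed.
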